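(* Let $X$ be a compact metric space with more than one point, and let $\Delta:\mathrm{C}(X)^+\setminus\{0\}\to(0,+\infty)$ be an order-preserving map. For every finite set $\mathcal F\subseteq\mathrm{C}(X)$, every $\varepsilon>0$ and every $M\in\mathbb N$, there exist a finite set $\mathcal H\subseteq\mathrm{C}(X)^+\setminus\{0\}$ with $\mathrm{supp}(h)\neq X$ for each $h\in\mathcal H$, and $L\in\mathbb N$, with the following property. If $n>L$ and $\theta:\mathrm{C}(X)\to\mathrm{M}_n(\mathbb C)$ is a unital point-evaluation map with $\mathrm{tr}(\theta(h))>\Delta(h)$ for all $h\in\mathcal H$, then there are integers $n_0,n_1\ge0$ with $n_0+Mn_1=n$ and $n_0\le n_1$, unital point-evaluation maps $\theta_0:\mathrm{C}(X)\to\mathrm{M}_{n_0}(\mathbb C)$ and $\theta_1:\mathrm{C}(X)\to\mathrm{M}_{n_1}(\mathbb C)$ (with $\theta_0=0$ if $n_0=0$), and a permutation unitary $u\in\mathrm{M}_n(\mathbb C)$ such that $$\|\theta(a)-u^*(\theta_0(a)\oplus\underbrace{\theta_1(a)\oplus\cdots\oplus\theta_1(a)}_{M})u\|<\varepsilon,\quad a\in\mathcal F.$$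
   Context: A unital point-evaluation map $\theta:\mathrm{C}(X)\to\mathrm{M}_n(\mathbb C)$ is one of the form $\theta(f)=\mathrm{diag}(f(x_1),\dots,f(x_n))$ for some $x_1,\dots,x_n\in X$. $\mathrm{tr}$ denotes the normalized trace on $\mathrm{M}_n(\mathbb C)$. *)

(* Defs.v *)
From HB Require Import structures.
From mathcomp Require Import all_boot all_order all_algebra.
From mathcomp Require Import all_classical all_reals all_analysis.
From mathcomp Require Import complex perm.
Import Order.TTheory GRing.Theory Num.Theory numFieldNormedType.Exports.
Import ComplexField.
Set Implicit Arguments. Unset Strict Implicit. Unset Printing Implicit Defensive.
Local Open Scope ring_scope.
Local Open Scope classical_set_scope.

(* C(X): continuous complex-valued functions on X (R[i] carries the
   topology of its norm). *)
Definition CX (R : realType) (X : topologicalType) : set (X -> R[i]) :=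
  [set f | continuous (f : X -> (R[i] : numFieldType))].

(* C(X)^+ \ {0}: continuous, pointwise nonnegative (in the order of C,
   i.e. real and >= 0), and not identically zero. *)
Definition CXpos0 (R : realType) (X : topologicalType) : set (X -> R[i]) :=
  [set f | CX f /\ (forall x, 0 <= f x) /\ f <> (fun _ => 0)].

Definition supp (R : realType) (X : topologicalType) (f : X -> R[i]) : set X :=
  closure [set x | f x != 0].

Definition order_preserving_pos (R : realType) (X : topologicalType)
    (Delta : (X -> R[i]) -> R) : Prop :=
  (forall f, CXpos0 f -> 0 < Delta f) /\
  (forall f g, CXpos0 f -> CXpos0 g -> (forall x, f x <= g x) ->
     Delta f <= Delta g).

(* unital point-evaluation map given by points x_0, ..., x_{n-1} *)
Definition pteval (R : realType) (X : Type) (n : nat) (pts : 'I_n -> X)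
    (f : X -> R[i]) : 'M[R[i]]_n :=
  diag_mx (\row_i f (pts i)).

Definition ntr (R : realType) (n : nat) (A : 'M[R[i]]_n) : R[i] :=
  \tr A / n%:R.

Definition cmod (R : realType) (z : R[i]) : R :=
  Num.sqrt (complex.Re z ^+ 2 + complex.Im z ^+ 2).

Definition vnorm (R : realType) (n : nat) (v : 'cV[R[i]]_n) : R :=
  Num.sqrt (\sum_(i < n) cmod (v i 0) ^+ 2).

Definition opnorm (R : realType) (n : nat) (A : 'M[R[i]]_n) : R :=
  sup [set vnorm (A *m v) | v in [set v : 'cV[R[i]]_n | vnorm v <= 1]].

Definition adj (R : realType) (n : nat) (A : 'M[R[i]]_n) : 'M[R[i]]_n :=
  (map_mx Num.conj A)^T.

Lemma sum_const_ord (M k : nat) : (\sum_(i < M) k)%N = (M * k)%N.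
Proof. by rewrite sum_nat_const card_ord. Qed.

Definition mxrep (R : realType) (M k : nat) (B : 'M[R[i]]_k) : 'M[R[i]]_(M * k) :=
  castmx (sum_const_ord M k, sum_const_ord M k) (\mxdiag_(i < M) B).

Definition dsum (R : realType) (n n0 n1 M : nat) (E : (n0 + M * n1)%N = n)
    (A : 'M[R[i]]_n0) (B : 'M[R[i]]_n1) : 'M[R[i]]_n :=
  castmx (E, E) (block_mx A 0 0 (mxrep M B)).

(* Main.v *)
Require Import Defs.
From HB Require Import structures.
From mathcomp Require Import all_boot all_order all_algebra.
From mathcomp Require Import all_classical all_reals all_analysis.
From mathcomp Require Import complex perm.
Import Order.TTheory GRing.Theory Num.Theory numFieldNormedType.Exports.
Import ComplexField.
From mathcomp Require Import ring lra zify.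
Local Open Scope ring_scope.
Local Open Scope classical_set_scope.

Definition ptal {X : topologicalType} (x0 : X) : Type := X.
HB.instance Definition _ (X : topologicalType) (x0 : X) := Topological.on (ptal x0).
HB.instance Definition _ (X : topologicalType) (x0 : X) := isPointed.Build (ptal x0) x0.
Lemma cc {X : topologicalType} (x0 : X) : compact [set: X] -> @cover_compact X [set: X].
Proof. move=> h. have := @compact_cover (ptal x0). move=> E. have : compact [set: ptal x0] by []. rewrite E. exact. Qed.

Lemma cmodE (R : realType) (z : R[i]) : `|z| = ((cmod z)%:C)%C.
Proof. by rewrite normc_def. Qed.

Lemma near_all (R : realType) (X : pseudoMetricType R) (F : seq (X -> R[i]))
  (x : X) (e : R) : 0 < e -> {subset F <= @CX R X} ->
  \forall y \near x, forall g, g \in F -> cmod (g y - g x) < e.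
Proof.
move=> e0; elim: F => [|g F IH] HF.
  by apply: nearW => y g; rewrite in_nil.
have /set_mem Hg := HF g (mem_head g F).
have e0' : (0 : R[i]) < (e%:C)%C by rewrite ltcR.
have H1 : \forall t \near x, `|g t - g x| < (e%:C)%C.
  exact: (@cvgr_distC_lt _ (R[i] : numFieldType) _ _ _ g (g x) (Hg x)).
have H2 := IH (fun h hF => HF h (mem_behead (s := g :: F) hF)).
apply: (filterS2 _ _ H1 H2) => y h1 h2 h; rewrite inE => /orP [/eqP -> | hF].
  by rewrite -ltcR -cmodE.
exact: h2.
Qed.

Lemma cover_lemma (R : realType) (X : pseudoMetricType R) (cX : compact [set: X])
  (x0 : X) (F : seq (X -> R[i])) (e : R) : 0 < e -> {subset F <= @CX R X} ->
  exists (K : nat) (rep : 'I_K -> X) (cl : X -> 'I_K),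
    forall y g, g \in F -> cmod (g y - g (rep (cl y))) < e.
Proof.
move=> e0 HF.
pose V (x : X) := [set y | forall g, g \in F -> cmod (g y - g x) < e].
have ccX : cover_compact [set: X] := cc x0 cX.
have := ccX X setT (fun x => interior (V x)).
case.
- by move=> i _; exact: open_interior.
- move=> y _; exists y => //; exact: near_all.
move=> D' _ Hcov.
pose s : seq X := finmap.enum_fset D'.
exists (size s), (fun j => nth x0 s j).
have : forall y, exists j : 'I_(size s), V (nth x0 s j) y.
  move=> y; have [x Dx Hx] := Hcov y Logic.I.
  have xs : x \in s by [].
  exists (Ordinal (etrans (index_mem x s) xs)) => /=.
  rewrite nth_index //; exact: interior_subset.
move=> /choice [cl Hcl]; exists cl => y g gF; exact: Hcl.
Qed.

Lemma sumn_enum K (f : 'I_K -> nat) : sumn [seq f j | j <- enum 'I_K] = (\sum_(j < K) f j)%N.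
Proof. by rewrite sumnE big_map big_enum. Qed.

Lemma sumn_nseq' m k : sumn (nseq m k) = (m * k)%N.
Proof. by elim: m => //= m ->; rewrite mulSn. Qed.

Lemma comb (K M n : nat) (ws : seq 'I_K) : size ws = n -> (M * M * K < n)%N -> (0 < M)%N ->
  exists s0 s1 : seq 'I_K, (size s0 <= size s1)%N /\ perm_eq ws (s0 ++ flatten (nseq M s1)).
Proof.
move=> Hn HL M0.
pose c j := count_mem j ws.
pose s1 := flatten [seq nseq (c j %/ M) j | j <- enum 'I_K].
pose s0 := flatten [seq nseq (c j %% M) j | j <- enum 'I_K].
have Hp : perm_eq ws (s0 ++ flatten (nseq M s1)).
  apply/allP => y _ /=.
  have Hnseq : forall m (t : seq 'I_K), count_mem y (flatten (nseq m t)) = (m * count_mem y t)%N.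
    by move=> m t; elim: m => [|m IH] //=; rewrite count_cat IH mulSn.
  have Hsel : forall g : 'I_K -> nat,
      count_mem y (flatten [seq nseq (g j) j | j <- enum 'I_K]) = g y.
    move=> g; rewrite count_flatten -map_comp /comp.
    rewrite sumn_enum (bigD1 y) //= big1 => [|j /negbTE hj].
      by rewrite count_nseq /= eqxx mul1n addn0.
    rewrite count_nseq /=; move/eqP: hj => hj; by rewrite (introF eqP hj).
  rewrite count_cat Hnseq !Hsel -/(c y).
  by rewrite {1}(divn_eq (c y) M) addnC mulnC.
exists s0, s1; split => //.
have Hs := perm_size Hp; rewrite size_cat size_flatten /shape map_nseq in Hs.
rewrite sumn_nseq' in Hs.
have Hs0 : (size s0 + K <= K * M)%N.
  rewrite size_flatten /shape -map_comp /comp sumn_enum.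
  have HK : K = (\sum_(j < K) 1)%N by rewrite sum_nat_const card_ord muln1.
  rewrite [X in (_ + X <= _)%N]HK [X in (_ <= X * _)%N]HK.
  rewrite -big_split /= big_distrl /=.
  apply: leq_sum => j _; rewrite size_nseq mul1n addn1; exact: ltn_pmod.
move: Hs; rewrite Hn => Hs.
rewrite leqNgt; apply/negP => Hlt.
have h1 : (M * (size s1).+1 <= M * size s0)%N by rewrite leq_mul2l Hlt orbT.
have h2 : ((M.+1) * (size s0 + K) <= M.+1 * (K * M))%N by rewrite leq_mul2l Hs0 orbT.
nia.
Qed.

Definition isdg {R : realType} {n} (A : 'M[R[i]]_n) (s : seq R[i]) :=
  forall i j : 'I_n, A i j = if (i : nat) == j then s`_i else 0.

Lemma dg_cast (R : realType) m n (E : m = n) (A : 'M[R[i]]_m) s :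
  isdg A s -> isdg (castmx (E, E) A) s.
Proof. by move=> H i j; rewrite castmxE H. Qed.

Lemma dg_block (R : realType) p q (A : 'M[R[i]]_p) (B : 'M[R[i]]_q) s t :
  isdg A s -> isdg B t -> size s = p -> isdg (block_mx A 0 0 B) (s ++ t).
Proof.
move=> HA HB Hs i j.
case: (split_ordP i) => i' -> ; case: (split_ordP j) => j' ->.
- by rewrite block_mxEul HA /= nth_cat Hs ltn_ord.
- rewrite block_mxEur mxE /=; case: eqP => // E.
  have := ltn_ord i'; rewrite E; lia.
- rewrite block_mxEdl mxE /=; case: eqP => // E.
  have := ltn_ord j'; rewrite -E; lia.
- rewrite block_mxEdr HB /= nth_cat Hs ltnNge leq_addr /= addKn.
  by rewrite eqn_add2l.
Qed.

Lemma dg_mxdiag (R : realType) M k (B : 'M[R[i]]_k) t :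
  isdg B t -> size t = k ->
  isdg (@mxdiag _ M (fun=> k) (fun=> B)) (flatten (nseq M t)).
Proof.
move=> HB Ht; elim: M => [|M IH].
  move=> [i Hi]; exfalso; move: Hi; by rewrite big_ord0.
rewrite mxdiag_recl; apply: dg_cast => /=.
exact: dg_block.
Qed.

Lemma dg_mxrep (R : realType) M k (B : 'M[R[i]]_k) t :
  isdg B t -> size t = k -> isdg (mxrep M B) (flatten (nseq M t)).
Proof. by move=> HB Ht; apply: dg_cast; apply: dg_mxdiag. Qed.

Lemma dg_pteval (R : realType) (X : Type) n (pts : 'I_n -> X) (f : X -> R[i]) :
  isdg (pteval pts f) [seq f (pts i) | i <- enum 'I_n].
Proof.
move=> i j; rewrite /pteval mxE mxE (nth_map i) ?size_enum_ord // nth_ord_enum.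
by case: (i =P j) => [-> | ne]; rewrite ?eqxx ?mulr1n //; case: eqP => // E; exfalso; apply: ne; exact: val_inj.
Qed.

Lemma dg_dsum (R : realType) n n0 n1 M (E : (n0 + M * n1)%N = n)
    (A : 'M[R[i]]_n0) (B : 'M[R[i]]_n1) s t :
  isdg A s -> isdg B t -> size s = n0 -> size t = n1 ->
  isdg (dsum E A B) (s ++ flatten (nseq M t)).
Proof.
move=> HA HB Hs Ht; apply: dg_cast; apply: dg_block => //; exact: dg_mxrep.
Qed.
Lemma adj_perm (R : realType) n (s : 'S_n) : adj (perm_mx s : 'M[R[i]]_n) = perm_mx (s^-1)%g.
Proof.
rewrite /adj -tr_perm_mx; congr trmx; apply/matrixP => i j.
by rewrite !mxE conjC_nat.
Qed.

Lemma conj_perm (R : realType) n (A : 'M[R[i]]_n) (s : 'S_n) i j :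
  (adj (perm_mx s) *m A *m perm_mx s) i j = A ((s^-1)%g i) ((s^-1)%g j).
Proof.
rewrite adj_perm -row_permE -[s in perm_mx s](invgK s) -col_permE.
by rewrite !mxE.
Qed.

Lemma cmod_ge0 (R : realType) (z : R[i]) : 0 <= cmod z.
Proof. exact: sqrtr_ge0. Qed.

Lemma cmod_sqr (R : realType) (z : R[i]) : cmod z ^+ 2 = complex.Re z ^+ 2 + complex.Im z ^+ 2.
Proof. by rewrite /cmod sqr_sqrtr // addr_ge0 // sqr_ge0. Qed.

Lemma cmodM_sqr (R : realType) (x y : R[i]) : cmod (x * y) ^+ 2 = cmod x ^+ 2 * cmod y ^+ 2.
Proof.
rewrite !cmod_sqr; case: x => a b; case: y => c d /=.
by ring.
Qed.

Lemma opnorm_dg (R : realType) n (A : 'M[R[i]]_n) (d : 'I_n -> R[i]) (c : R) :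
  0 <= c -> (forall i j, A i j = if i == j then d i else 0) ->
  (forall i, cmod (d i) <= c) -> opnorm A <= c.
Proof.
move=> c0 HA Hd; apply: ge_sup.
  exists (vnorm (A *m 0)); exists 0 => //=.
  rewrite /vnorm big1 ?sqrtr0 // => i _.
  by rewrite mxE /cmod /= expr0n /= addr0 sqrtr0 expr0n.
move=> y [v /= Hv <-].
have Av : forall i, (A *m v) i 0 = d i * v i 0.
  move=> i; rewrite mxE (bigD1 i) //= big1 ?addr0 ?HA ?eqxx // => j /negbTE ji.
  by rewrite HA eq_sym ji mul0r.
rewrite /vnorm -[c](@ger0_norm _ c) // -sqrtr_sqr ler_sqrt ?sqr_ge0 //.
have Hv2 : \sum_(i < n) cmod (v i 0) ^+ 2 <= 1.
  by move: Hv; rewrite /vnorm -sqrtr1 ler_sqrt // sqrtr1.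
apply: (le_trans (y := \sum_(i < n) c ^+ 2 * cmod (v i 0) ^+ 2)).
  apply: ler_sum => i _; rewrite Av cmodM_sqr.
  apply: ler_wpM2r; first exact: sqr_ge0.
  have := Hd i; have := @cmod_ge0 R (d i); nra.
rewrite -mulr_sumr; have := sqr_ge0 c; nra.
Qed.

Lemma map_nth_enum (X : Type) (x0 : X) (T : Type) (f : X -> T) (s : seq X) :
  [seq f (nth x0 s i) | i : 'I_(size s) <- enum 'I_(size s)] = map f s.
Proof.
have -> : [seq f (nth x0 s i) | i : 'I_(size s) <- enum 'I_(size s)] =
   map f (map (nth x0 s) (map val (enum 'I_(size s)))).
  by rewrite -!map_comp.
by rewrite val_enum_ord -/(mkseq _ _) mkseq_nth.
Qed.

Lemma assemble (R : realType) (X : eqType) (x0 : X) (F : seq (X -> R[i]))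
  (eps c : R) n (pts r : 'I_n -> X) M (q0 q1 : seq X) :
  0 <= c -> c < eps -> (size q0 <= size q1)%N ->
  perm_eq [seq r i | i <- enum 'I_n] (q0 ++ flatten (nseq M q1)) ->
  (forall a i, a \in F -> cmod (a (pts i) - a (r i)) <= c) ->
  exists (n0 n1 : nat) (E : (n0 + M * n1)%N = n)
         (pts0 : 'I_n0 -> X) (pts1 : 'I_n1 -> X) (s : 'S_n),
    (n0 <= n1)%N /\
    forall a, a \in F ->
      opnorm (pteval pts a -
              adj (perm_mx s) *m dsum E (pteval pts0 a) (pteval pts1 a)
                *m perm_mx s) < eps.
Proof.
move=> c0 ceps Hsz Hp Hc.
set q := q0 ++ flatten (nseq M q1) in Hp.
have Hq : size q == n.
  by rewrite -(perm_size Hp) size_map size_enum_ord.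
have E : (size q0 + M * size q1)%N = n.
  move/eqP: Hq; rewrite /q size_cat size_flatten /shape map_nseq.
  by rewrite sumn_nseq'.
exists (size q0), (size q1), E, (fun i => nth x0 q0 i), (fun i => nth x0 q1 i).
pose t := Tuple Hq.
have /tuple_permP [p Hpe] : perm_eq [seq r i | i <- enum 'I_n] t by [].
have Hr : forall i, r i = nth x0 q (p i).
  move=> i; have := congr1 (fun s => nth x0 s i) Hpe => /=.
  rewrite (nth_map i) ?size_enum_ord // nth_ord_enum => ->.
  rewrite -(tnth_nth x0 [tuple tnth t (p i0) | i0 < n] i) tnth_mktuple.
  by rewrite (tnth_nth x0).
exists (p^-1)%g; split => // a aF.
have HD : isdg (dsum E (pteval (fun i => nth x0 q0 i) a) (pteval (fun i => nth x0 q1 i) a))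
            (map a q).
  rewrite /q map_cat map_flatten map_nseq.
  have := @dg_dsum R _ _ _ _ E _ _ _ _ (@dg_pteval R X _ (fun i => nth x0 q0 i) a) (@dg_pteval R X _ (fun i => nth x0 q1 i) a).
  rewrite !map_nth_enum; apply; by rewrite size_map.
apply: (le_lt_trans _ ceps).
apply: (@opnorm_dg R n _ (fun i => a (pts i) - a (r i))) => //; last first.
  by move=> i; exact: Hc.
have Hsub : forall (A B : 'M[R[i]]_n) i j, (A - B) i j = A i j - B i j by move=> *; rewrite !mxE.
move=> i j; rewrite Hsub conj_perm invgK dg_pteval HD.
case: (eqVneq i j) => [<- | ne].
  rewrite !eqxx (nth_map i) ?size_enum_ord // nth_ord_enum.
  rewrite (nth_map x0) ?Hr // (eqP Hq) //.
have ne1 : (i : nat) != j by [].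
have ne2 : (p i : nat) != p j.
  by apply: contra ne => /eqP /val_inj /perm_inj ->.
by rewrite (negbTE ne1) (negbTE ne2) subr0.
Qed.

Theorem lemma7p7 (R : realType) (X : pseudoMetricType R)
    (hX : hausdorff_space X) (cX : compact [set: X])
    (two_pts : exists x y : X, x != y)
    (Delta : (X -> R[i]) -> R) (hDelta : @order_preserving_pos R X Delta) :
  forall (F : seq (X -> R[i])), {subset F <= @CX R X} ->
  forall (eps : R), 0 < eps -> forall M : nat,
  exists (H : seq (X -> R[i])) (L : nat),
    (forall h, h \in H -> CXpos0 h /\ supp h <> [set: X]) /\
    forall (n : nat) (pts : 'I_n -> X), (L < n)%N ->
      (forall h, h \in H -> ((Delta h)%:C)%C < ntr (pteval pts h)) ->
      exists (n0 n1 : nat) (E : (n0 + M * n1)%N = n)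
             (pts0 : 'I_n0 -> X) (pts1 : 'I_n1 -> X) (s : 'S_n),
        (n0 <= n1)%N /\
        forall a, a \in F ->
          opnorm (pteval pts a -
                  adj (perm_mx s) *m dsum E (pteval pts0 a) (pteval pts1 a)
                    *m perm_mx s) < eps.
Proof.
Proof.
move=> F HF eps eps0 M.
have [x0 _] : exists x : X, True by case: two_pts => x _; exists x.
have e0 : 0 < eps / 2 by rewrite divr_gt0.
have [K [rep [cl Hcl]]] := @cover_lemma R X cX x0 F (eps / 2) e0 HF.
exists [::], (M * M * K)%N; split; first by move=> h; rewrite in_nil.
move=> n pts Hn _.
have ce : eps / 2 < eps by rewrite ltr_pdivrMr // ltr_pMr // ltr1n.
case: (posnP M) => [M0 | Mpos].
  subst M.
  apply: (@assemble R X x0 F eps (eps / 2) n pts pts 0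
     [seq pts i | i <- enum 'I_n] [seq pts i | i <- enum 'I_n]) => //.
  - exact: ltW.
  - by rewrite /= cats0.
  - move=> a i _; rewrite subrr /cmod /= expr0n /= addr0 sqrtr0; exact: ltW.
have Hws : size [seq cl (pts i) | i <- enum 'I_n] = n by rewrite size_map size_enum_ord.
have [s0 [s1 [Hs Hp]]] := @comb K M n [seq cl (pts i) | i <- enum 'I_n] Hws Hn Mpos.
apply: (@assemble R X x0 F eps (eps / 2) n pts (fun i => rep (cl (pts i))) M
   (map rep s0) (map rep s1)) => //.
- exact: ltW.
- by rewrite !size_map.
- have := perm_map rep Hp.
  by rewrite map_cat map_flatten map_nseq -map_comp.
- by move=> a i aF; apply: ltW; exact: Hcl.
Qed.
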